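(* Let $\mathcal{X}$ be a right coideal of $\mathcal{U}$, $\mu\in\mathbb{C}^\times$, and let $0\ne X\in\mathcal{X}\cap[\mathcal{U}]_\mu$. Write uniquely $X=\sum_{t=0}^{N}X_tG^{(t)}$ with $N=\partial_4(X)$, each $X_t\in\mathrm{Lin}\{F^{(i)}f_\mu E^{(j)}:i,j\in\mathbb{N}_0\}$ and $X_N\ne0$. For $0\le t\le N$ let $s_{13}(t)=\max\{\partial_{13}(X_m): m\ge t,\ X_m\ne0\}$. Then $$\dim\mathcal{X}\ \ge\ \sum_{t=0}^{N}\big(s_{13}(t)+1\big).$$
   Context: Let $q\in\mathbb{C}$ be transcendental. $\mathcal{U}$ is the unital algebra generated by $E,F,G,f_\mu$ ($\mu\in\mathbb{C}^\times$) with relations $f_\mu f_\nu=f_{\mu\nu}$, $f_\mu E=\mu^2Ef_\mu$, $f_\mu F=\mu^{-2}Ff_\mu$, $f_\mu G=Gf_\mu$, $GE=E(G+2)$, $GF=F(G-2)$, $EF-FE=(f_q-f_{q^{-1}})/(q-q^{-1})$, $f_1=1$; $K=f_{q^{1/2}}$ for a fixed square root; Hopf structure $\Delta E=E\otimes K+K^{-1}\otimes E$, $\Delta F=F\otimes K+K^{-1}\otimes F$, $\Delta G=1\otimes G+G\otimes1$, $\Delta f_\mu=f_\mu\otimes f_\mu$. With $[k]=(q^k-q^{-k})/(q-q^{-1})$, $F^{(k)}=F^kK^{-k}/[k]!$, $E^{(k)}=K^{-k}E^k/[k]!$, $G^{(k)}=G^k/k!$, the elements $F^{(i)}f_\mu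 E^{(j)}G^{(k)}$ form a basis of $\mathcal{U}$; $[\mathcal{U}]_\mu=\mathrm{Lin}\{F^{(i)}f_\mu E^{(j)}G^{(k)}:i,j,k\in\mathbb{N}_0\}$. For a basis element $Y=F^{(i)}f_\mu E^{(j)}G^{(k)}$ put $\partial_{13}(Y)=i+j$, $\partial_4(Y)=k$, and for a finite linear combination of basis elements with nonzero coefficients take the maximum over the occurring basis elements. A right coideal is a subspace $\mathcal{X}$ with $\Delta(\mathcal{X})\subset\mathcal{X}\otimes\mathcal{U}$. *)

(* Defs.v *)
From HB Require Import structures.
From mathcomp Require Import all_boot all_order all_algebra.
From mathcomp Require Import reals complex.
Set Implicit Arguments. Unset Strict Implicit. Unset Printing Implicit Defensive.
Import Order.TTheory GRing.Theory Num.Theory.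
Local Open Scope ring_scope.

(* The complex field: C := R[i] for an arbitrary (hence isomorphic to the
   usual) real number field R : realType. *)

Definition transcendental (C : fieldType) (q : C) : Prop :=
  forall p : {poly rat}, p != 0 -> (map_poly (fun r : rat => ratr r) p).[q] != 0.

Definition qnum (C : fieldType) (q : C) (k : nat) : C :=
  (q ^+ k - q ^- k) / (q - q^-1).
Definition qfact (C : fieldType) (q : C) (k : nat) : C :=
  \prod_(1 <= i < k.+1) qnum q i.

Definition indep_family (C : fieldType) (V : lmodType C) (I : eqType)
    (D : I -> Prop) (b : I -> V) : Prop :=
  forall (s : seq I) (c : I -> C), uniq s -> (forall i, i \in s -> D i) ->
    \sum_(i <- s) c i *: b i = 0 -> forall i, i \in s -> c i = 0.

Definition spans_family (C : fieldType) (V : lmodType C) (I : eqType)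
    (D : I -> Prop) (b : I -> V) : Prop :=
  forall v : V, exists (s : seq I) (c : I -> C),
    (forall i, i \in s -> D i) /\ v = \sum_(i <- s) c i *: b i.

Definition basis_family (C : fieldType) (V : lmodType C) (I : eqType)
    (D : I -> Prop) (b : I -> V) : Prop :=
  indep_family D b /\ spans_family D b.

Definition lin_indep (C : fieldType) (V : lmodType C) (n : nat) (v : 'I_n -> V) : Prop :=
  forall c : 'I_n -> C, \sum_(i < n) c i *: v i = 0 -> forall i, c i = 0.

Definition subspace (C : fieldType) (V : lmodType C) (P : V -> Prop) : Prop :=
  P 0 /\ forall (a : C) (x y : V), P x -> P y -> P (a *: x + y).

Definition dim_ge (C : fieldType) (V : lmodType C) (P : V -> Prop) (n : nat) : Prop :=
  exists v : 'I_n -> V, (forall i, P (v i)) /\ lin_indep v.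

(* Divided powers and PBW basis elements
   F^(i) f_mu E^(j) G^(k) with F^(i) = F^i K^-i/[i]!, E^(j) = K^-j E^j/[j]!,
   G^(k) = G^k/k!, where K = f_{qh}, K^-1 = f_{qh^-1}, qh^2 = q. *)
Section PBW.
Variables (C : fieldType) (U : algType C) (q qh : C) (E F G : U) (f : C -> U).
Definition Fdiv (i : nat) : U := (qfact q i)^-1 *: (F ^+ i * f (qh ^- i)).
Definition Ediv (j : nat) : U := (qfact q j)^-1 *: (f (qh ^- j) * E ^+ j).
Definition Gdiv (k : nat) : U := (k`!%:R : C)^-1 *: G ^+ k.
Definition pbw (x : nat * C * nat * nat) : U :=
  Fdiv x.1.1.1 * f x.1.1.2 * Ediv x.1.2 * Gdiv x.2.
End PBW.

Definition U_relations (C : fieldType) (U : algType C) (q : C)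
    (E F G : U) (f : C -> U) : Prop :=
  (forall mu nu, mu != 0 -> nu != 0 -> f mu * f nu = f (mu * nu)) /\
  (forall mu, mu != 0 -> f mu * E = (mu ^+ 2) *: (E * f mu)) /\
  (forall mu, mu != 0 -> f mu * F = (mu ^- 2) *: (F * f mu)) /\
  (forall mu, mu != 0 -> f mu * G = G * f mu) /\
  G * E = E * (G + 2%:R) /\
  G * F = F * (G - 2%:R) /\
  E * F - F * E = (q - q^-1)^-1 *: (f q - f q^-1) /\
  f 1 = 1.

(* T together with tens : U -> U -> T is the algebra tensor product U (x) U:
   tens is bilinear and multiplicative, and the products of PBW basis
   elements form a basis of T. *)
Definition is_tensor_square (C : fieldType) (U T : algType C)
    (tens : U -> U -> T) (D : nat * C * nat * nat -> Prop)
    (b : nat * C * nat * nat -> U) : Prop :=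
  [/\ forall a x y z, tens (a *: x + y) z = a *: tens x z + tens y z,
      forall a x y z, tens z (a *: x + y) = a *: tens z x + tens z y,
      forall x y x' y', tens x y * tens x' y' = tens (x * x') (y * y'),
      tens 1 1 = 1
    & basis_family (fun p : (nat * C * nat * nat) * (nat * C * nat * nat) => D p.1 /\ D p.2)
                   (fun p => tens (b p.1) (b p.2))].

Definition is_coproduct (C : fieldType) (U T : algType C) (tens : U -> U -> T)
    (qh : C) (E F G : U) (f : C -> U) (Delta : U -> T) : Prop :=
  (forall a x y, Delta (a *: x + y) = a *: Delta x + Delta y) /\
  (forall x y, Delta (x * y) = Delta x * Delta y) /\
  Delta 1 = 1 /\
  Delta E = tens E (f qh) + tens (f qh^-1) E /\
  Delta F = tens F (f qh) + tens (f qh^-1) F /\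
  Delta G = tens 1 G + tens G 1 /\
  (forall mu, mu != 0 -> Delta (f mu) = tens (f mu) (f mu)).

Definition right_coideal (C : fieldType) (U T : algType C) (tens : U -> U -> T)
    (Delta : U -> T) (P : U -> Prop) : Prop :=
  subspace P /\
  forall x, P x -> exists s : seq (U * U),
      (forall p, p \in s -> P p.1) /\ Delta x = \sum_(p <- s) tens p.1 p.2.

(* s_13(t) for X = sum_{(i,j,m) in s} c_{ijm} F^(i) f_mu E^(j) G^(m) with all
   c_{ijm} <> 0: the max of i+j over terms with m >= t; N = partial_4(X). *)
Definition part4 (s : seq (nat * nat * nat)) : nat := \max_(p <- s) p.2.
Definition s13 (s : seq (nat * nat * nat)) (t : nat) : nat :=
  \max_(p <- s | (t <= p.2)%N) (p.1.1 + p.1.2).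

(* Main.v *)
Require Import Defs.
From HB Require Import structures.
From mathcomp Require Import all_boot all_order all_algebra.
From mathcomp Require Import reals complex.
From mathcomp Require Import ring zify.
From Stdlib Require Import ClassicalEpsilon.
Import Order.TTheory GRing.Theory Num.Theory.
Local Open Scope ring_scope.
Set Implicit Arguments. Unset Strict Implicit. Unset Printing Implicit Defensive.
Lemma sum_pred1 (I : eqType) (V : nmodType) (u : seq I) x (F : I -> V) :
  uniq u -> \sum_(y <- u | y == x) F y = if x \in u then F x else 0.
Proof.
elim: u => [|a u IH] /=; first by rewrite big_nil.
move=> /andP[au uu]; rewrite big_cons inE IH //.
case: (eqVneq a x) => [ax|ax] /=; last by [].
by subst a; rewrite (negbTE au) addr0.
Qed.

Section Coord.
Variables (K : fieldType) (V : lmodType K) (I : eqType) (D : I -> Prop) (b : I -> V).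
Hypothesis hb : basis_family D b.

Lemma regroup (s u : seq I) (c : I -> K) : uniq u -> {subset s <= u} ->
  \sum_(i <- s) c i *: b i = \sum_(x <- u) (\sum_(i <- s | i == x) c i) *: b x.
Proof.
move=> uu su.
under [RHS]eq_bigr do rewrite scaler_suml.
rewrite (exchange_big_dep predT) //=.
apply: eq_big_seq => i hi.
rewrite (eq_bigl (fun x => x == i)); last by move=> x; rewrite eq_sym.
by rewrite sum_pred1 // su.
Qed.

Lemma coord_uniq (s s' : seq I) (c c' : I -> K) :
  (forall i, i \in s -> D i) -> (forall i, i \in s' -> D i) ->
  \sum_(i <- s) c i *: b i = \sum_(i <- s') c' i *: b i ->
  forall x, \sum_(i <- s | i == x) c i = \sum_(i <- s' | i == x) c' i.
Proof.
move=> Ds Ds' e x.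
set u := undup (s ++ s').
have uu : uniq u by apply: undup_uniq.
have su : {subset s <= u} by move=> i hi; rewrite mem_undup mem_cat hi.
have su' : {subset s' <= u} by move=> i hi; rewrite mem_undup mem_cat hi orbT.
move: e; rewrite (regroup c uu su) (regroup c' uu su') => e.
have : \sum_(y <- u) ((\sum_(i <- s | i == y) c i) - (\sum_(i <- s' | i == y) c' i)) *: b y = 0.
  by rewrite (eq_bigr (fun y => (\sum_(i <- s | i == y) c i) *: b y - (\sum_(i <- s' | i == y) c' i) *: b y)) ?sumrB ?e ?subrr // => y _; rewrite scalerBl.
move=> /(proj1 hb u (fun y => (\sum_(i <- s | i == y) c i) - (\sum_(i <- s' | i == y) c' i))) => /(_ uu).
have Du : forall i, i \in u -> D i.
  by move=> i; rewrite mem_undup mem_cat => /orP[/Ds|/Ds'].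
move=> /(_ Du) h.
case xu: (x \in u); first by apply/eqP; rewrite -subr_eq0; apply/eqP; apply: h.
rewrite !big1_seq //.
- by move=> i /andP[/eqP -> hx]; move: xu; rewrite mem_undup mem_cat hx ?orbT.
- by move=> i /andP[/eqP -> hx]; move: xu; rewrite mem_undup mem_cat hx ?orbT.
Qed.

Definition rep (v : V) : {p : seq I * (I -> K) |
    (forall i, i \in p.1 -> D i) /\ v = \sum_(i <- p.1) p.2 i *: b i}.
Proof.
apply: constructive_indefinite_description.
have [s [c [H1 H2]]] := proj2 hb v.
by exists (s, c).
Defined.

Definition crd (x : I) (v : V) : K :=
  \sum_(i <- (proj1_sig (rep v)).1 | i == x) (proj1_sig (rep v)).2 i.

Lemma crd_sum (s : seq I) (c : I -> K) x : (forall i, i \in s -> D i) ->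
  crd x (\sum_(i <- s) c i *: b i) = \sum_(i <- s | i == x) c i.
Proof.
move=> Ds; rewrite /crd.
case: (rep _) => [[s' c'] [/= H1 H2]] /=.
by symmetry; apply: coord_uniq.
Qed.

Lemma crd_basis x y : D y -> crd x (b y) = (y == x)%:R.
Proof.
move=> Dy.
have -> : b y = \sum_(i <- [:: y]) (fun _ => 1) i *: b i by rewrite big_seq1 scale1r.
rewrite crd_sum; last by move=> i; rewrite inE => /eqP ->.
by rewrite big_mkcond big_seq1; case: (y == x).
Qed.

Lemma crd_rep v : v = \sum_(i <- (proj1_sig (rep v)).1) (proj1_sig (rep v)).2 i *: b i.
Proof. by case: (rep v) => [[s c] [/= H1 H2]]. Qed.

Lemma crd_repD v i : i \in (proj1_sig (rep v)).1 -> D i.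
Proof. by case: (rep v) => [[s c] [/= H1 H2]]; apply: H1. Qed.

Lemma crd_expand v (u : seq I) : uniq u -> {subset (proj1_sig (rep v)).1 <= u} ->
  v = \sum_(x <- u) crd x v *: b x.
Proof.
move=> uu su; rewrite {1}(crd_rep v) (regroup _ uu su).
by apply: eq_bigr.
Qed.

Lemma crd_out v x : x \notin (proj1_sig (rep v)).1 -> crd x v = 0.
Proof.
move=> hx; rewrite /crd big1_seq // => i /andP[/eqP -> hi].
by rewrite hi in hx.
Qed.

Lemma crd_lin x a u v : crd x (a *: u + v) = a * crd x u + crd x v.
Proof.
set su := (proj1_sig (rep u)).1; set sv := (proj1_sig (rep v)).1.
set w := undup (su ++ sv).
have uw : uniq w by apply: undup_uniq.
have Dw : forall i, i \in w -> D i.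
  by move=> i; rewrite mem_undup mem_cat => /orP[/crd_repD|/crd_repD].
rewrite (crd_expand (v := u) uw); last by move=> i hi; rewrite mem_undup mem_cat hi.
rewrite (crd_expand (v := v) uw); last by move=> i hi; rewrite mem_undup mem_cat hi orbT.
rewrite scaler_sumr -big_split /=.
rewrite (eq_bigr (fun y => (a * crd y u + crd y v) *: b y)); last first.
  by move=> y _; rewrite scalerA scalerDl.
rewrite !crd_sum //.
rewrite !sum_pred1 //.
case: ifP => // _; rewrite mulr0 addr0 //.
Qed.

Lemma crd0 x : crd x 0 = 0.
Proof.
have -> : (0 : V) = \sum_(i <- [::]) (fun _ => 0) i *: b i by rewrite big_nil.
by rewrite crd_sum ?big_nil.
Qed.

Lemma crdZ x a u : crd x (a *: u) = a * crd x u.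
Proof. by rewrite -[a *: u]addr0 crd_lin crd0 addr0. Qed.

Lemma crdD x u v : crd x (u + v) = crd x u + crd x v.
Proof. by rewrite -[u]scale1r crd_lin scale1r mul1r. Qed.

Lemma crd_sumV (J : Type) x (r : seq J) (P : pred J) (F : J -> V) :
  crd x (\sum_(j <- r | P j) F j) = \sum_(j <- r | P j) crd x (F j).
Proof.
elim: r => [|a r IH]; first by rewrite !big_nil crd0.
by rewrite !big_cons; case: (P a); rewrite ?crdD IH.
Qed.

Lemma crd_ext u v : (forall x, crd x u = crd x v) -> u = v.
Proof.
move=> h.
set w := undup ((proj1_sig (rep u)).1 ++ (proj1_sig (rep v)).1).
have uw : uniq w by apply: undup_uniq.
rewrite (crd_expand (v := u) uw); last by move=> i hi; rewrite mem_undup mem_cat hi.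
rewrite (crd_expand (v := v) uw); last by move=> i hi; rewrite mem_undup mem_cat hi orbT.
by apply: eq_bigr => x _; rewrite h.
Qed.

Lemma sum_delta (u : seq I) (g : I -> K) x : uniq u ->
  \sum_(x' <- u) g x' * (x' == x)%:R = if x \in u then g x else 0.
Proof.
move=> uu; rewrite -sum_pred1 // [RHS]big_mkcond /=.
by apply: eq_bigr => x' _; case: (x' == x); rewrite ?mulr1 ?mulr0.
Qed.

Lemma crd_undup v x : (if x \in undup (proj1_sig (rep v)).1 then crd x v else 0) = crd x v.
Proof.
case: ifP => // h; rewrite crd_out //; by rewrite -mem_undup h.
Qed.
End Coord.
Section Tens.
Variables (K : fieldType) (U T : algType K) (tens : U -> U -> T)
  (D : nat * K * nat * nat -> Prop) (b : nat * K * nat * nat -> U).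
Hypothesis hU : basis_family D b.
Hypothesis hT : is_tensor_square tens D b.

Definition D2 := fun p : (nat * K * nat * nat) * (nat * K * nat * nat) => D p.1 /\ D p.2.
Definition b2 := fun p : (nat * K * nat * nat) * (nat * K * nat * nat) => tens (b p.1) (b p.2).
Lemma hT2 : basis_family D2 b2. Proof. by case: hT. Qed.

Lemma tens0l z : tens 0 z = 0.
Proof.
case: hT => tl _ _ _ _; have h := tl 1 0 0 z; move: h; rewrite !scale1r addr0 => h.
by apply: (addrI (tens 0 z)); rewrite addr0 -h.
Qed.
Lemma tens0r z : tens z 0 = 0.
Proof.
case: hT => _ tr _ _ _; have h := tr 1 0 0 z; move: h; rewrite !scale1r addr0 => h.
by apply: (addrI (tens z 0)); rewrite addr0 -h.
Qed.
Lemma tensZl a x z : tens (a *: x) z = a *: tens x z.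
Proof. by case: hT => tl _ _ _ _; rewrite -[a *: x]addr0 tl tens0l addr0. Qed.
Lemma tensZr a x z : tens z (a *: x) = a *: tens z x.
Proof. by case: hT => _ tr _ _ _; rewrite -[a *: x]addr0 tr tens0r addr0. Qed.
Lemma tensDl x y z : tens (x + y) z = tens x z + tens y z.
Proof. by case: hT => tl _ _ _ _; have := tl 1 x y z; rewrite !scale1r. Qed.
Lemma tensDr x y z : tens z (x + y) = tens z x + tens z y.
Proof. by case: hT => _ tr _ _ _; have := tr 1 x y z; rewrite !scale1r. Qed.
Lemma tens_suml (J : Type) (r : seq J) (F : J -> U) z :
  tens (\sum_(j <- r) F j) z = \sum_(j <- r) tens (F j) z.
Proof.
elim: r => [|a r IH]; first by rewrite !big_nil tens0l.
by rewrite !big_cons tensDl IH.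
Qed.
Lemma tens_sumr (J : Type) (r : seq J) (F : J -> U) z :
  tens z (\sum_(j <- r) F j) = \sum_(j <- r) tens z (F j).
Proof.
elim: r => [|a r IH]; first by rewrite !big_nil tens0r.
by rewrite !big_cons tensDr IH.
Qed.
Lemma tensM x y x' y' : tens x y * tens x' y' = tens (x * x') (y * y').
Proof. by case: hT. Qed.
Lemma tens11 : tens 1 1 = 1.
Proof. by case: hT. Qed.

Definition psi (y : nat * K * nat * nat) (w : T) : U :=
  \sum_(z <- undup (proj1_sig (rep hT2 w)).1 | z.2 == y) crd hT2 z w *: b z.1.

Lemma psi_crd x y w : crd hU x (psi y w) = crd hT2 (x, y) w.
Proof.
rewrite /psi.
set u := undup _.
have uu : uniq u by apply: undup_uniq.
have Du : forall z, z \in u -> D2 z by move=> z; rewrite mem_undup => /crd_repD; apply.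
rewrite (eq_bigr (fun z => crd hT2 (z.1, y) w *: b z.1)); last first.
  by move=> [z1 z2] /= /eqP ->.
rewrite -big_filter -(big_map fst predT (fun x' => crd hT2 (x', y) w *: b x')).
rewrite crd_sum; last first.
  move=> i /mapP [z]; rewrite mem_filter => /andP[_ /Du [h _]] ->; exact h.
set m := map _ _.
have um : uniq m.
  rewrite map_inj_in_uniq ?filter_uniq // => [[a1 a2] [c1 c2]].
  by rewrite !mem_filter /= => /andP[/eqP -> _] /andP[/eqP -> _] ->.
rewrite sum_pred1 //; case: ifP => // hx.
rewrite crd_out //; apply/negP => h.
have : x \in m by apply/mapP; exists (x, y); rewrite // mem_filter eqxx /= mem_undup.
by rewrite hx.
Qed.

Lemma crdT_tens x y a c : crd hT2 (x, y) (tens a c) = crd hU x a * crd hU y c.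
Proof.
set ua := undup (proj1_sig (rep hU a)).1.
set uc := undup (proj1_sig (rep hU c)).1.
have uua : uniq ua by apply: undup_uniq.
have uuc : uniq uc by apply: undup_uniq.
rewrite {1}(crd_expand (hb := hU) (v := a) uua); last by move=> i; rewrite mem_undup.
rewrite {1}(crd_expand (hb := hU) (v := c) uuc); last by move=> i; rewrite mem_undup.
rewrite tens_suml crd_sumV.
under eq_bigr do rewrite tensZl tens_sumr crdZ crd_sumV.
under eq_bigr do under eq_bigr do rewrite tensZr crdZ.
have Dua : forall i, i \in ua -> D i by move=> i; rewrite mem_undup => /crd_repD; apply.
have Duc : forall i, i \in uc -> D i by move=> i; rewrite mem_undup => /crd_repD; apply.
rewrite -(crd_undup hU a) -(crd_undup hU c) -/ua -/uc.
rewrite -(sum_delta (fun x0 => crd hU x0 a) x uua) -(sum_delta (fun x0 => crd hU x0 c) y uuc) mulr_suml.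
apply: eq_big_seq => x' hx'; rewrite mulr_sumr mulr_sumr.
apply: eq_big_seq => y' hy'.
have -> : tens (b x') (b y') = b2 (x', y') by [].
rewrite crd_basis; last by split; [apply: Dua | apply: Duc].
rewrite xpair_eqE.
by case: (x' == x); case: (y' == y); rewrite /= ?mulr1 ?mulr0 ?mul0r.
Qed.

Lemma psi_tens y (L : seq (U * U)) :
  psi y (\sum_(p <- L) tens p.1 p.2) = \sum_(p <- L) crd hU y p.2 *: p.1.
Proof.
apply: (@crd_ext _ _ _ _ _ hU) => x.
rewrite psi_crd !crd_sumV.
by apply: eq_bigr => p _; rewrite crdT_tens crdZ mulrC.
Qed.
End Tens.
Lemma combine (K : fieldType) (V : lmodType K) (i : nat) (W : nat -> V)
    (al be : nat -> K) (g : K) :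
  al i.+1 = 0 -> be 0 = 0 -> (forall r, (r < i.+2)%N -> al r + be r = g) ->
  \sum_(r < i.+1) al r *: W r + \sum_(r < i.+1) be r.+1 *: W r.+1
    = g *: \sum_(r < i.+2) W r.
Proof.
move=> a0 b0 h.
rewrite scaler_sumr (eq_bigr (fun r : 'I_i.+2 => al r *: W r + be r *: W r)); last first.
  by move=> r _; rewrite -scalerDl h.
rewrite big_split /= [X in _ = X + _]big_ord_recr /= a0 scale0r addr0.
by rewrite [X in _ = _ + X]big_ord_recl /= b0 scale0r add0r.
Qed.

Section S.
Variables (R : realType) (q : R[i]).
Hypothesis q0 : q != 0.
Hypothesis qd : q - q^-1 != 0.
Lemma qid i r : (r < i.+2)%N ->
  (q ^+ r) ^+ 2 * q ^+ (i - r) * qnum q (i.+1 - r) + q ^+ r.-1 * qnum q r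
  = q ^+ i * qnum q i.+1.
Proof.
have qn0 : qnum q 0 = 0 by rewrite /qnum expr0 invr1 subrr mul0r.
case: r => [|r] hr.
  by rewrite qn0 mulr0 addr0 expr0 expr1n mul1r !subn0.
have [a ->] : exists a, i = (r + a)%N by exists (i - r)%N; rewrite subnKC //; lia.
case: a => [|a].
  rewrite addn0. have -> : (r.+1 - r.+1 = 0)%N by lia. have -> : (r - r.+1 = 0)%N by lia.
  by rewrite qn0 mulr0 add0r.
have -> : (r + a.+1 - r.+1 = a)%N by lia.
have -> : ((r + a.+1).+1 - r.+1 = a.+1)%N by lia.
rewrite /qnum /= !exprS !exprD !exprS.
set x := q ^+ r; set y := q ^+ a.
have x0 : x != 0 by rewrite expf_neq0.
have y0 : y != 0 by rewrite expf_neq0.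
rewrite ?expr0 ?mulr1.
field.
have qq : q * q - 1 != 0 by rewrite -(mulfV q0) -mulrBr mulf_neq0.
by rewrite q0 qq x0 y0.
Qed.
End S.

Section Alg.
Variables (R : realType) (q qh : R[i]) (U T : algType R[i]) (E F G : U) (f : R[i] -> U)
  (tens : U -> U -> T) (Delta : U -> T).
Hypothesis tq : transcendental q.
Hypothesis hqh : qh ^+ 2 = q.
Hypothesis hrel : U_relations q E F G f.
Hypothesis hcop : is_coproduct tens qh E F G f Delta.
Hypothesis hT : is_tensor_square tens (fun x : nat * R[i] * nat * nat => x.1.1.2 != 0)
                   (pbw q qh E F G f).

Lemma qX_neq1 d : (0 < d)%N -> q ^+ d != 1.
Proof.
move=> d0.
have p0 : ('X^d - 1 : {poly rat}) != 0.
  apply/eqP => h; have := congr1 (horner^~ 0) h; rewrite !hornerE expr0n.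
  rewrite gtn_eqF //= sub0r => /eqP; rewrite oppr_eq0 oner_eq0 //.
have := tq p0.
have -> : map_poly (fun r : rat => ratr r) ('X^d - 1) = ('X^d - 1 : {poly R[i]}).
  by rewrite rmorphB /= map_polyXn rmorph1.
by rewrite !hornerE subr_eq0.
Qed.

Lemma q_neq0 : q != 0.
Proof.
have p0 : ('X : {poly rat}) != 0 by rewrite polyX_eq0.
have := tq p0.
have -> : map_poly (fun r : rat => ratr r) 'X = ('X : {poly R[i]}) by rewrite map_polyX.
by rewrite hornerX.
Qed.

Lemma qh_neq0 : qh != 0.
Proof. by apply/eqP => h; move: q_neq0; rewrite -hqh h expr0n /= eqxx. Qed.

Lemma qX_neq0 n : q ^+ n != 0.
Proof. by rewrite expf_neq0 // q_neq0. Qed.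

Lemma qpow_neq_inv m : (0 < m)%N -> q ^+ m != q ^- m.
Proof.
move=> m0; apply/eqP => h.
have : q ^+ (m + m) = 1 by rewrite exprD {1}h mulVf // qX_neq0.
by move/eqP; rewrite (negbTE (qX_neq1 _)) // addn_gt0 m0.
Qed.

Lemma qden_neq0 : q - q^-1 != 0.
Proof. by rewrite subr_eq0; have := qpow_neq_inv (ltn0Sn 0); rewrite expr1. Qed.

Lemma qnum0 : qnum q 0 = 0.
Proof. by rewrite /qnum expr0 invr1 subrr mul0r. Qed.

Lemma qnum1 : qnum q 1 = 1.
Proof. by rewrite /qnum expr1 divff // qden_neq0. Qed.

Lemma qnum_neq0 n : qnum q n.+1 != 0.
Proof.
rewrite /qnum mulf_neq0 // ?invr_eq0 ?qden_neq0 // subr_eq0.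
exact: qpow_neq_inv.
Qed.

Lemma qfact0 : qfact q 0 = 1.
Proof. by rewrite /qfact big_geq. Qed.

Lemma qfactS n : qfact q n.+1 = qfact q n * qnum q n.+1.
Proof. by rewrite /qfact big_nat_recr. Qed.

Lemma fM a b : a != 0 -> b != 0 -> f a * f b = f (a * b).
Proof. by case: hrel => h _; apply: h. Qed.
Lemma f1 : f 1 = 1.
Proof. by case: hrel => _ [_ [_ [_ [_ [_ [_ h]]]]]]. Qed.
Lemma fC a b : a != 0 -> b != 0 -> f a * f b = f b * f a.
Proof. by move=> a0 b0; rewrite !fM // mulrC. Qed.
Lemma fE a : a != 0 -> f a * E = (a ^+ 2) *: (E * f a).
Proof. by case: hrel => _ [h _]; apply: h. Qed.
Lemma fF a : a != 0 -> f a * F = (a ^- 2) *: (F * f a).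
Proof. by case: hrel => _ [_ [h _]]; apply: h. Qed.
Lemma fG a : a != 0 -> f a * G = G * f a.
Proof. by case: hrel => _ [_ [_ [h _]]]; apply: h. Qed.
Lemma Ef a : a != 0 -> E * f a = (a ^- 2) *: (f a * E).
Proof.
move=> a0; rewrite fE // scalerA mulVf ?scale1r //.
by rewrite expf_neq0.
Qed.

Lemma invq_neq0 n : q ^- n != 0.
Proof. by rewrite invr_eq0 qX_neq0. Qed.
Lemma invqh_neq0 n : qh ^- n != 0.
Proof. by rewrite invr_eq0 expf_neq0 // qh_neq0. Qed.

Lemma qhinv2 n : (qh ^- n) ^- 2 = q ^+ n.
Proof. by rewrite exprVn invrK -exprM mulnC exprM hqh. Qed.
Lemma qinv2 n : (q ^- n) ^- 2 = (q ^+ n) ^+ 2.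
Proof. by rewrite exprVn invrK. Qed.

Notation Fd := (Fdiv q qh F f).
Notation Ed := (Ediv q qh E f).
Notation Gd := (Gdiv G).
Notation b := (pbw q qh E F G f).

Lemma Fd0 : Fd 0 = 1.
Proof. by rewrite /Fdiv qfact0 invr1 scale1r !expr0 ?invr1 f1 mul1r. Qed.
Lemma Ed0 : Ed 0 = 1.
Proof. by rewrite /Ediv qfact0 invr1 scale1r !expr0 ?invr1 f1 mul1r. Qed.
Lemma Gd0 : Gd 0 = 1.
Proof. by rewrite /Gdiv fact0 invr1 scale1r expr0. Qed.
Lemma Fd1 : Fd 1 = F * f qh^-1.
Proof. by rewrite /Fdiv qfactS qfact0 mul1r qnum1 invr1 scale1r !expr1. Qed.
Lemma Ed1 : Ed 1 = f qh^-1 * E.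
Proof. by rewrite /Ediv qfactS qfact0 mul1r qnum1 invr1 scale1r !expr1. Qed.
Lemma Gd1 : Gd 1 = G.
Proof. by rewrite /Gdiv factS fact0 invr1 scale1r expr1. Qed.

Lemma qhS n : qh ^- n * qh^-1 = qh ^- n.+1.
Proof. by rewrite -invfM exprSr. Qed.
Lemma qhS' n : qh^-1 * qh ^- n = qh ^- n.+1.
Proof. by rewrite -invfM exprS. Qed.

Lemma Fd_rec a : Fd a * Fd 1 = (q ^+ a * qnum q a.+1) *: Fd a.+1.
Proof.
rewrite Fd1 /Fdiv -scalerAl -mulrA (mulrA (f _)) fF ?invqh_neq0 // qhinv2.
rewrite -scalerAl -scalerAr -!mulrA fM ?invqh_neq0 ?invr_neq0 ?qh_neq0 //.
rewrite qhS mulrA -exprSr !scalerA qfactS invfM.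
congr (_ *: _).
by rewrite -mulrA [qnum q a.+1 * _]mulrCA mulfV ?qnum_neq0 // mulr1 mulrC.
Qed.

Lemma Ed_rec a : Ed 1 * Ed a = (q ^+ a * qnum q a.+1) *: Ed a.+1.
Proof.
rewrite Ed1 /Ediv -scalerAr -mulrA (mulrA E) Ef ?invqh_neq0 // qhinv2.
rewrite -scalerAl -scalerAr !mulrA fM ?invqh_neq0 ?invr_neq0 ?qh_neq0 //.
rewrite qhS' -mulrA -exprS !scalerA qfactS invfM.
congr (_ *: _); rewrite -[q ^+ a * _ / _]mulrA -/(qnum q a.+1).
by rewrite -mulrA [qnum q a.+1 * _]mulrCA mulfV ?qnum_neq0 // mulr1 mulrC.
Qed.

Lemma Gd_rec a : Gd a * G = (a.+1)%:R *: Gd a.+1.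
Proof.
rewrite /Gdiv -scalerAl -exprSr scalerA factS natrM invfM mulrA mulfV ?mul1r //.
by rewrite pnatr_eq0.
Qed.
Lemma Dlin a x y : Delta (a *: x + y) = a *: Delta x + Delta y.
Proof. by case: hcop => h _; apply: h. Qed.
Lemma DMul x y : Delta (x * y) = Delta x * Delta y.
Proof. by case: hcop => _ [h _]; apply: h. Qed.
Lemma D1 : Delta 1 = 1.
Proof. by case: hcop => _ [_ [h _]]. Qed.
Lemma DE : Delta E = tens E (f qh) + tens (f qh^-1) E.
Proof. by case: hcop => _ [_ [_ [h _]]]. Qed.
Lemma DF : Delta F = tens F (f qh) + tens (f qh^-1) F.
Proof. by case: hcop => _ [_ [_ [_ [h _]]]]. Qed.
Lemma DG : Delta G = tens 1 G + tens G 1.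
Proof. by case: hcop => _ [_ [_ [_ [_ [h _]]]]]. Qed.
Lemma Df a : a != 0 -> Delta (f a) = tens (f a) (f a).
Proof. by case: hcop => _ [_ [_ [_ [_ [_ h]]]]]; apply: h. Qed.
Lemma D0 : Delta 0 = 0.
Proof.
have h := Dlin 1 0 0; move: h; rewrite !scale1r addr0 => h.
by apply: (addrI (Delta 0)); rewrite addr0 -h.
Qed.
Lemma DZ a x : Delta (a *: x) = a *: Delta x.
Proof. by rewrite -[a *: x]addr0 Dlin D0 addr0. Qed.
Lemma DD x y : Delta (x + y) = Delta x + Delta y.
Proof. by have := Dlin 1 x y; rewrite !scale1r. Qed.
Lemma Dsum (J : Type) (r : seq J) (Fx : J -> U) :
  Delta (\sum_(j <- r) Fx j) = \sum_(j <- r) Delta (Fx j).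
Proof.
elim: r => [|a r IH]; first by rewrite !big_nil D0.
by rewrite !big_cons DD IH.
Qed.

Lemma qinvS r : q ^- r * q^-1 = q ^- r.+1.
Proof. by rewrite -invfM exprSr. Qed.
Lemma qinvS' r : q^-1 * q ^- r = q ^- r.+1.
Proof. by rewrite -invfM exprS. Qed.
Lemma fqq r : f (q ^- r) * f (q^-1) = f (q ^- r.+1).
Proof. by rewrite fM ?invq_neq0 ?invr_neq0 ?q_neq0 // qinvS. Qed.
Lemma fqq' r : f (q^-1) * f (q ^- r) = f (q ^- r.+1).
Proof. by rewrite fM ?invq_neq0 ?invr_neq0 ?q_neq0 // qinvS'. Qed.
Lemma qhqh : qh^-1 * qh^-1 = q^-1.
Proof. by rewrite -invfM -expr2 hqh. Qed.

Lemma DFd1 : Delta (Fd 1) = tens (Fd 1) 1 + tens (f (q^-1)) (Fd 1).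
Proof.
rewrite Fd1 DMul DF Df ?invr_neq0 ?qh_neq0 // mulrDl !(tensM hT).
rewrite fM ?invr_neq0 ?qh_neq0 // mulfV ?qh_neq0 // f1.
by rewrite fM ?invr_neq0 ?qh_neq0 // qhqh.
Qed.

Lemma DEd1 : Delta (Ed 1) = tens (Ed 1) 1 + tens (f (q^-1)) (Ed 1).
Proof.
rewrite Ed1 DMul DE Df ?invr_neq0 ?qh_neq0 // mulrDr !(tensM hT).
rewrite fM ?invr_neq0 ?qh_neq0 // mulVf ?qh_neq0 // f1.
by rewrite fM ?invr_neq0 ?qh_neq0 // qhqh.
Qed.

Lemma fq_Fd1 r : f (q ^- r) * Fd 1 = (q ^+ r) ^+ 2 *: (Fd 1 * f (q ^- r)).
Proof.
rewrite Fd1 mulrA fF ?invq_neq0 // qinv2 -scalerAl -!mulrA.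
by rewrite fC ?invq_neq0 ?invr_neq0 ?qh_neq0.
Qed.

Lemma Ed1_fq r : Ed 1 * f (q ^- r) = (q ^+ r) ^+ 2 *: (f (q ^- r) * Ed 1).
Proof.
rewrite Ed1 -mulrA Ef ?invq_neq0 // qinv2 -scalerAr !mulrA.
by rewrite fC ?invq_neq0 ?invr_neq0 ?qh_neq0.
Qed.

Lemma DeltaFd i : Delta (Fd i) = \sum_(r < i.+1) tens (Fd (i - r) * f (q ^- r)) (Fd r).
Proof.
elim: i => [|i IH].
  by rewrite big_ord1 /= subnn Fd0 expr0 invr1 f1 mulr1 (tens11 hT) D1.
have g0 : q ^+ i * qnum q i.+1 != 0 by rewrite mulf_neq0 ?qX_neq0 ?qnum_neq0.
have -> : Fd i.+1 = (q ^+ i * qnum q i.+1)^-1 *: (Fd i * Fd 1).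
  by rewrite Fd_rec scalerA mulVf // scale1r.
rewrite DZ DMul IH DFd1 mulr_suml.
under eq_bigr do rewrite mulrDr.
rewrite big_split /=.
pose al r := (q ^+ r) ^+ 2 * q ^+ (i - r) * qnum q (i.+1 - r).
pose be r := q ^+ r.-1 * qnum q r.
pose W r := tens (Fd (i.+1 - r) * f (q ^- r)) (Fd r).
rewrite (eq_bigr (fun r : 'I_i.+1 => al r *: W r)); last first.
  move=> r _; rewrite (tensM hT) mulr1 -mulrA fq_Fd1 -scalerAr mulrA Fd_rec.
  rewrite -scalerAl scalerA (tensZl hT) /al /W subSn ?mulrA //; by have := ltn_ord r; rewrite ltnS.
rewrite [X in _ + X](eq_bigr (fun r : 'I_i.+1 => be r.+1 *: W r.+1)); last first.
  by move=> r _; rewrite (tensM hT) -mulrA fqq Fd_rec (tensZr hT).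
rewrite (@combine _ _ i W al be (q ^+ i * qnum q i.+1)).
- by rewrite scalerA mulVf // scale1r.
- by rewrite /al subnn qnum0 mulr0.
- by rewrite /be qnum0 mulr0.
- by move=> r hr; rewrite /al /be qid // ?q_neq0 ?qden_neq0.
Qed.

Lemma DeltaEd j : Delta (Ed j) = \sum_(l < j.+1) tens (f (q ^- l) * Ed (j - l)) (Ed l).
Proof.
elim: j => [|j IH].
  by rewrite big_ord1 /= subnn Ed0 expr0 invr1 f1 mulr1 (tens11 hT) D1.
have g0 : q ^+ j * qnum q j.+1 != 0 by rewrite mulf_neq0 ?qX_neq0 ?qnum_neq0.
have -> : Ed j.+1 = (q ^+ j * qnum q j.+1)^-1 *: (Ed 1 * Ed j).
  by rewrite Ed_rec scalerA mulVf // scale1r.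
rewrite DZ DMul IH DEd1 mulrDl !mulr_sumr.
pose al r := (q ^+ r) ^+ 2 * q ^+ (j - r) * qnum q (j.+1 - r).
pose be r := q ^+ r.-1 * qnum q r.
pose W r := tens (f (q ^- r) * Ed (j.+1 - r)) (Ed r).
rewrite (eq_bigr (fun r : 'I_j.+1 => al r *: W r)); last first.
  move=> r _; rewrite (tensM hT) mul1r mulrA Ed1_fq -scalerAl -mulrA Ed_rec.
  rewrite -scalerAr scalerA (tensZl hT) /al /W subSn ?mulrA //.
  by have := ltn_ord r; rewrite ltnS.
rewrite [X in _ + X](eq_bigr (fun r : 'I_j.+1 => be r.+1 *: W r.+1)); last first.
  by move=> r _; rewrite (tensM hT) mulrA fqq' Ed_rec (tensZr hT).
rewrite (@combine _ _ j W al be (q ^+ j * qnum q j.+1)).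
- by rewrite scalerA mulVf // scale1r.
- by rewrite /al subnn qnum0 mulr0.
- by rewrite /be qnum0 mulr0.
- by move=> r hr; rewrite /al /be qid // ?q_neq0 ?qden_neq0.
Qed.

Lemma DeltaGd k : Delta (Gd k) = \sum_(m < k.+1) tens (Gd (k - m)) (Gd m).
Proof.
elim: k => [|k IH].
  by rewrite big_ord1 /= subnn Gd0 (tens11 hT) D1.
have g0 : (k.+1)%:R != 0 :> R[i] by rewrite pnatr_eq0.
have -> : Gd k.+1 = ((k.+1)%:R)^-1 *: (Gd k * G).
  by rewrite Gd_rec scalerA mulVf // scale1r.
rewrite DZ DMul IH DG mulr_suml.
under eq_bigr do rewrite mulrDr.
rewrite big_split /= addrC.
pose al r := ((k.+1 - r)%:R : R[i]).
pose be r := (r%:R : R[i]).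
pose W r := tens (Gd (k.+1 - r)) (Gd r).
rewrite (eq_bigr (fun r : 'I_k.+1 => al r *: W r)); last first.
  move=> r _; rewrite (tensM hT) mulr1 Gd_rec (tensZl hT) /al /W subSn //.
  by have := ltn_ord r; rewrite ltnS.
rewrite [X in _ + X](eq_bigr (fun r : 'I_k.+1 => be r.+1 *: W r.+1)); last first.
  by move=> r _; rewrite (tensM hT) mulr1 Gd_rec (tensZr hT).
rewrite (@combine _ _ k W al be (k.+1)%:R).
- by rewrite scalerA mulVf // scale1r.
- by rewrite /al subnn.
- by [].
- by move=> r hr; rewrite /al /be -natrD subnK.
Qed.

Lemma Delta_pbw i la j k : la != 0 ->
  Delta (b (i, la, j, k)) = \sum_(r < i.+1) \sum_(l < j.+1) \sum_(m < k.+1)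
     tens (b ((i - r)%N, (q ^- r * la) * q ^- l, (j - l)%N, (k - m)%N))
          (b ((r : nat), la, (l : nat), (m : nat))).
Proof.
move=> la0.
rewrite /pbw /= !DMul DeltaFd Df // DeltaEd DeltaGd.
rewrite !mulr_suml; apply: eq_bigr => r _.
rewrite [_ * tens (f la) (f la) * _]mulr_sumr mulr_suml; apply: eq_bigr => l _.
rewrite mulr_sumr; apply: eq_bigr => m _.
rewrite !(tensM hT); congr tens.
rewrite -!mulrA (mulrA (f (q ^- r))) fM ?invq_neq0 //.
by rewrite (mulrA (f (q ^- r * la))) fM ?invq_neq0 ?mulf_neq0 ?invq_neq0 // [q ^- r * (la / _)]mulrA.
Qed.
End Alg.
Lemma sum_ord_pred1 (K : fieldType) (n r0 : nat) (Fx : nat -> K) :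
  \sum_(r < n) (if (r : nat) == r0 then Fx r else 0) = if (r0 < n)%N then Fx r0 else 0.
Proof.
rewrite -(big_mkord predT (fun r => if r == r0 then Fx r else 0)) -big_mkcond /=.
by rewrite sum_pred1 ?iota_uniq // mem_index_iota.
Qed.

Lemma sum_ord_delta (K : fieldType) (n r0 : nat) (Fx : nat -> K) :
  \sum_(r < n) (((r : nat) == r0)%:R * Fx r) = ((r0 < n)%N)%:R * Fx r0.
Proof.
rewrite (eq_bigr (fun r : 'I_n => if (r : nat) == r0 then Fx r else 0)).
  by rewrite sum_ord_pred1; case: (r0 < n)%N; rewrite ?mul1r ?mul0r.
by move=> r _; case: (_ == _); rewrite ?mul1r ?mul0r.
Qed.

Lemma trip (K : fieldType) (A : eqType) (i j k r0 l0 m0 : nat) (g : nat -> nat -> nat -> A) (a : A) :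
  \sum_(r < i.+1) \sum_(l < j.+1) \sum_(m < k.+1)
     ((((r : nat) == r0) && ((l : nat) == l0) && ((m : nat) == m0) && (g r l m == a))%:R : K)
  = ((((r0 <= i)%N && (l0 <= j)%N && (m0 <= k)%N && (g r0 l0 m0 == a)))%:R).
Proof.
have e : forall r l m : nat, ((((r : nat) == r0) && ((l : nat) == l0) && ((m : nat) == m0) && (g r l m == a))%:R : K)
   = (r == r0)%:R * ((l == l0)%:R * ((m == m0)%:R * (g r l m == a)%:R)).
  by move=> r l m; case: (r == r0); case: (l == l0); case: (m == m0); case: (g r l m == a);
     rewrite ?mul1r ?mul0r ?mulr0.
under eq_bigr do under eq_bigr do under eq_bigr do rewrite e.
have in1 : forall r l : nat, \sum_(m < k.+1) ((r == r0)%:R * ((l == l0)%:R * (((m : nat) == m0)%:R * (g r l m == a)%:R)))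
   = (r == r0)%:R * ((l == l0)%:R * (((m0 < k.+1)%N)%:R * (g r l m0 == a)%:R)) :> K.
  move=> r l; rewrite -mulr_sumr -mulr_sumr.
  by rewrite (sum_ord_delta _ _ (fun m => (g r l m == a)%:R)).
under eq_bigr do under eq_bigr do rewrite in1.
have in2 : forall r : nat, \sum_(l < j.+1) ((r == r0)%:R * (((l : nat) == l0)%:R * (((m0 < k.+1)%N)%:R * (g r l m0 == a)%:R)))
   = (r == r0)%:R * (((l0 < j.+1)%N)%:R * (((m0 < k.+1)%N)%:R * (g r l0 m0 == a)%:R)) :> K.
  move=> r; rewrite -mulr_sumr.
  by rewrite (sum_ord_delta _ _ (fun l => ((m0 < k.+1)%N)%:R * (g r l m0 == a)%:R)).
under eq_bigr do rewrite in2.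
rewrite (sum_ord_delta _ _ (fun r => ((l0 < j.+1)%N)%:R * (((m0 < k.+1)%N)%:R * (g r l0 m0 == a)%:R))) !ltnS.
by case: (r0 <= i)%N; case: (l0 <= j)%N; case: (m0 <= k)%N; case: (g r0 l0 m0 == a);
     rewrite ?mul1r ?mul0r ?mulr0.
Qed.
Lemma exists_max (A : eqType) (s : seq A) (Q : pred A) (g : A -> nat) :
  has Q s -> exists p, [/\ p \in s, Q p & forall p', p' \in s -> Q p' -> (g p' <= g p)%N].
Proof.
elim: s => [|a s IH] //= /orP [Qa|hs].
- case hs: (has Q s).
  + have [p [ps Qp mp]] := IH hs.
    case: (leqP (g a) (g p)) => hap.
    * exists p; split => //; first by rewrite inE ps orbT.
      by move=> p'; rewrite inE => /orP [/eqP -> | /mp]; [|apply].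
    * exists a; split => //; first by rewrite inE eqxx.
      move=> p'; rewrite inE => /orP [/eqP -> // | p's Qp'].
      by apply: leq_trans (mp _ p's Qp') (ltnW hap).
  + exists a; split => //; first by rewrite inE eqxx.
    move=> p'; rewrite inE => /orP [/eqP -> // | p's Qp'].
    by move/hasPn: hs => /(_ p' p's); rewrite Qp'.
- have [p [ps Qp mp]] := IH hs.
  case: (boolP (Q a)) => Qa.
  + case: (leqP (g a) (g p)) => hap.
    * exists p; split => //; first by rewrite inE ps orbT.
      by move=> p'; rewrite inE => /orP [/eqP -> | /mp]; [|apply].
    * exists a; split => //; first by rewrite inE eqxx.
      move=> p'; rewrite inE => /orP [/eqP -> // | p's Qp'].
      by apply: leq_trans (mp _ p's Qp') (ltnW hap).
  + exists p; split => //; first by rewrite inE ps orbT.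
    move=> p'; rewrite inE => /orP [/eqP -> | /mp]; last by apply.
    by rewrite (negbTE Qa).
Qed.

Lemma max_witness (A : eqType) (s : seq A) (Q : pred A) (g : A -> nat) n :
  has Q s -> (n <= \max_(p <- s | Q p) g p)%N -> exists p, [/\ p \in s, Q p & (n <= g p)%N].
Proof.
move=> hs hn; have [p [ps Qp mp]] := exists_max g hs.
exists p; split => //; apply: leq_trans hn _.
by apply/bigmax_leqP_seq => i; apply: mp.
Qed.

Lemma tri (K : fieldType) (V : lmodType K) (n : nat) (v : 'I_n -> V)
    (phi : 'I_n -> V -> K) (h : 'I_n -> nat) :
  (forall i (a : 'I_n -> K), phi i (\sum_(j < n) a j *: v j) = \sum_(j < n) a j * phi i (v j)) ->
  (forall i, phi i (v i) != 0) ->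
  (forall i j, j != i -> (h i <= h j)%N -> phi i (v j) = 0) ->
  lin_indep v.
Proof.
move=> lin diag off a sa.
have phi0 : forall i, phi i 0 = 0.
  move=> i; have := lin i (fun _ => 0).
  rewrite big1 => [->|j _]; last by rewrite scale0r.
  by rewrite big1 // => j _; rewrite mul0r.
suff H : forall m i, (h i < m)%N -> a i = 0 by move=> i; apply: (H (h i).+1).
elim=> [|m IH] i hi //.
have := lin i a; rewrite sa phi0 (bigD1 i) //= big1 ?addr0.
- move/esym/eqP; rewrite mulf_eq0 => /orP [/eqP //|].
  by rewrite (negbTE (diag i)).
- move=> j ji; case: (ltnP (h j) (h i)) => hji.
  + by rewrite IH ?mul0r //; apply: leq_trans hji _; rewrite -ltnS.
  + by rewrite off ?mulr0.
Qed.

Lemma sub_sum (K : fieldType) (V : lmodType K) (P : V -> Prop) (L : seq (V * V)) (a : V * V -> K) :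
  subspace P -> (forall p, p \in L -> P p.1) -> P (\sum_(p <- L) a p *: p.1).
Proof.
move=> [P0 Pc]; elim: L => [|x L IH] hL; first by rewrite big_nil.
rewrite big_cons; apply: Pc; first by apply: hL; rewrite inE eqxx.
by apply: IH => p hp; apply: hL; rewrite inE hp orbT.
Qed.
Section Main.
Variables (R : realType) (q qh : R[i]) (U : algType R[i]) (E F G : U) (f : R[i] -> U)
  (T : algType R[i]) (tens : U -> U -> T) (Delta : U -> T)
  (mu : R[i]) (s : seq (nat * nat * nat)) (c : nat * nat * nat -> R[i]).
Hypothesis tq : transcendental q.
Hypothesis hqh : qh ^+ 2 = q.
Hypothesis hrel : U_relations q E F G f.
Hypothesis hU : basis_family (fun x : nat * R[i] * nat * nat => x.1.1.2 != 0) (pbw q qh E F G f).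
Hypothesis hT : is_tensor_square tens (fun x : nat * R[i] * nat * nat => x.1.1.2 != 0)
                   (pbw q qh E F G f).
Hypothesis hcop : is_coproduct tens qh E F G f Delta.
Hypothesis mu0 : mu != 0.
Hypothesis us : uniq s.

Notation b := (pbw q qh E F G f).
Definition Xs := \sum_(p <- s) c p *: b (p.1.1, mu, p.1.2, p.2).

Lemma DX : Delta Xs = \sum_(p <- s) c p *:
  \sum_(r < p.1.1.+1) \sum_(l < p.1.2.+1) \sum_(m < p.2.+1)
     tens (b ((p.1.1 - r)%N, (q ^- r * mu) * q ^- l, (p.1.2 - l)%N, (p.2 - m)%N))
          (b ((r : nat), mu, (l : nat), (m : nat))).
Proof.
rewrite /Xs (Dsum hcop); apply: eq_bigr => p _.
by rewrite (DZ hcop) (Delta_pbw tq hqh hrel hcop hT).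
Qed.

Lemma bool_cand (i j k r0 l0 m0 a b' kk : nat) (nu nu0 : R[i]) :
  ((r0 <= i)%N && (l0 <= j)%N && (m0 <= k)%N &&
     (((i - r0)%N, nu0, (j - l0)%N, (k - m0)%N) == (a, nu, b', kk)))
  = ((i, j, k) == ((a + r0)%N, (b' + l0)%N, (kk + m0)%N)) && (nu == nu0).
Proof.
apply/idP/idP.
- move=> /andP [/andP [/andP [h1 h2] h3] /eqP [e1 e2 e3 e4]].
  by rewrite -e1 -e3 -e4 !subnK // e2 !eqxx.
- move=> /andP [/eqP [-> -> ->] /eqP ->].
  by rewrite !leq_addl !addnK !eqxx.
Qed.

Lemma coefX (a : nat) (nu : R[i]) (b' kk r0 l0 m0 : nat) :
  crd (hT2 hT) ((a, nu, b', kk), (r0, mu, l0, m0)) (Delta Xs)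
  = if (nu == q ^- r0 * mu * q ^- l0) && (((a + r0)%N, (b' + l0)%N, (kk + m0)%N) \in s)
    then c ((a + r0)%N, (b' + l0)%N, (kk + m0)%N) else 0.
Proof.
rewrite DX crd_sumV.
set cand := ((a + r0)%N, (b' + l0)%N, (kk + m0)%N).
set nu0 := q ^- r0 * mu * q ^- l0.
rewrite (eq_bigr (fun p => c p * ((p == cand) && (nu == nu0))%:R)); last first.
  move=> [[i j] k] _ /=; rewrite crdZ; congr (_ * _).
  rewrite crd_sumV; under eq_bigr do rewrite crd_sumV.
  under eq_bigr do under eq_bigr do rewrite crd_sumV.
  pose g := fun r l m : nat => ((i - r)%N, q ^- r * mu * q ^- l, (j - l)%N, (k - m)%N).
  have cb : forall r l m : nat,
      crd (hT2 hT) ((a, nu, b', kk), (r0, mu, l0, m0))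
        (tens (b ((i - r)%N, q ^- r * mu * q ^- l, (j - l)%N, (k - m)%N)) (b (r, mu, l, m)))
      = ((((r : nat) == r0) && ((l : nat) == l0) && ((m : nat) == m0) && (g r l m == (a, nu, b', kk)))%:R).
    move=> r l m.
    have Dp : (fun p : (nat * R[i] * nat * nat) * (nat * R[i] * nat * nat) => p.1.1.1.2 != 0 /\ p.2.1.1.2 != 0)
       (((i - r)%N, q ^- r * mu * q ^- l, (j - l)%N, (k - m)%N), (r, mu, l, m)).
      by split => //=; rewrite !mulf_neq0 ?(invq_neq0 tq).
    rewrite (crd_basis (hT2 hT) _ Dp); congr ((nat_of_bool _)%:R).
    apply/idP/idP.
    + move/eqP => [e1 e2 e3 e4 e5 e6 e7].
      by rewrite e5 e6 e7 !eqxx /= /g -e1 -e2 -e3 -e4 e5 e6 e7.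
    + move=> /andP [/andP [/andP [/eqP er /eqP el] /eqP em] /eqP e].
      by rewrite -/(g r l m) e er el em.
  under eq_bigr do under eq_bigr do under eq_bigr do rewrite cb.
  by rewrite trip /g bool_cand.
case: (nu == nu0) => /=.
- by under eq_bigr do rewrite andbT; rewrite sum_delta.
- by rewrite big1 // => p _; rewrite andbF mulr0.
Qed.

Lemma expq_inj m n : q ^+ m = q ^+ n -> m = n.
Proof.
have key : forall m n, (m < n)%N -> q ^+ m = q ^+ n -> False.
  move=> a b hab e.
  have : q ^+ (b - a) = 1.
    apply: (mulfI (qX_neq0 tq a)); rewrite -exprD subnKC ?mulr1 //; exact: ltnW.
  by apply/eqP; rewrite qX_neq1 // subn_gt0.
case: (ltngtP m n) => // h e; first by case: (key _ _ h e).
by case: (key _ _ h (esym e)).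
Qed.

Lemma nu_neq a b a' b' : (a + b)%N != (a' + b')%N ->
  q ^- a * mu * q ^- b != q ^- a' * mu * q ^- b'.
Proof.
apply: contra => /eqP h; apply/eqP; apply: expq_inj.
move: h; rewrite ![q ^- _ * mu]mulrC -!mulrA -!invfM -!exprD => /(mulfI mu0).
by move/invr_inj.
Qed.

Lemma main_sec (P : U -> Prop) : right_coideal tens Delta P ->
  (forall p, p \in s -> c p != 0) -> Xs != 0 -> P Xs ->
  dim_ge P (\sum_(t < (part4 s).+1) (s13 s t).+1).
Proof.
move=> [Psub Pdec] cs X0 PX.
have sn : has (fun _ => true) s.
  by move: X0; rewrite /Xs; case: s => [|a s'] //; rewrite big_nil eqxx.
set N := part4 s.
pose L := [seq (n, t) | t <- iota 0 N.+1, n <- iota 0 (s13 s t).+1].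
have sizeL : size L = (\sum_(t < N.+1) (s13 s t).+1)%N.
  rewrite size_allpairs_dep sumnE big_map.
  rewrite -(big_mkord predT (fun t => (s13 s t).+1)) /index_iota subn0.
  by apply: eq_bigr => t _; rewrite size_iota.
have uL : uniq L.
  apply: allpairs_uniq_dep => [|t _|]; rewrite ?iota_uniq //.
  by move=> [t1 n1] [t2 n2] _ _ /= [-> ->].
have memL : forall x, x \in L -> exists p, [/\ p \in s, (x.2 <= p.2)%N & (x.1 <= p.1.1 + p.1.2)%N].
  move=> x /allpairsPdep [t [n [ht hn ->]]] /=.
  rewrite mem_iota add0n in ht; rewrite mem_iota add0n ltnS in hn.
  have hs1 : has (fun p => (t <= p.2)%N) s.
    have [p [ps _ hp]] := @max_witness _ s (fun _ => true) snd t sn ht.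
    by apply/hasP; exists p.
  have [p [ps hp1 hp2]] := max_witness hs1 hn.
  by exists p.
pose pn n := epsilon (inhabits (0,0,0)%N) (fun p => [/\ p \in s, (n <= p.1.1 + p.1.2)%N &
    forall p', p' \in s -> (n <= p'.1.1 + p'.1.2)%N -> (p'.2 <= p.2)%N]).
have pnP : forall x, x \in L -> [/\ pn x.1 \in s, (x.1 <= (pn x.1).1.1 + (pn x.1).1.2)%N,
    forall p', p' \in s -> (x.1 <= p'.1.1 + p'.1.2)%N -> (p'.2 <= (pn x.1).2)%N
    & (x.2 <= (pn x.1).2)%N].
  move=> x xL; have [p [ps hp1 hp2]] := memL x xL.
  have hq : has (fun p => (x.1 <= p.1.1 + p.1.2)%N) s by apply/hasP; exists p.
  have [[h1 h2 h3]] : [/\ pn x.1 \in s, (x.1 <= (pn x.1).1.1 + (pn x.1).1.2)%N &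
    forall p', p' \in s -> (x.1 <= p'.1.1 + p'.1.2)%N -> (p'.2 <= (pn x.1).2)%N].
    apply: (epsilon_spec (inhabits (0,0,0)%N) (fun p => [/\ p \in s, (x.1 <= p.1.1 + p.1.2)%N &
      forall p', p' \in s -> (x.1 <= p'.1.1 + p'.1.2)%N -> (p'.2 <= p.2)%N])).
    have [p0 [p0s Qp0 mp0]] := exists_max snd hq.
    by exists p0.
  split => //; apply: leq_trans hp1 (h3 _ ps hp2).
pose rr (x : nat * nat) := minn x.1 (pn x.1).1.1.
pose ll (x : nat * nat) := (x.1 - rr x)%N.
pose y (x : nat * nat) := (rr x, mu, ll x, x.2).
pose bet (x : nat * nat) := (((pn x.1).1.1 - rr x)%N, q ^- (rr x) * mu * q ^- (ll x),
               ((pn x.1).1.2 - ll x)%N, ((pn x.1).2 - x.2)%N).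
pose Z (x : nat * nat) := psi hT (y x) (Delta Xs).
have ZP : forall x, P (Z x).
  move=> x; have [Ls [PL eqD]] := Pdec Xs PX.
  by rewrite /Z eqD (psi_tens hU hT); apply: sub_sum.
have E12 : forall x, x \in L -> (rr x <= (pn x.1).1.1)%N /\ (ll x <= (pn x.1).1.2)%N.
  move=> x xL; have [ps hn hmax ht] := pnP x xL.
  split; first by rewrite /rr geq_minr.
  rewrite /ll /rr; move: hn; case: (leqP x.1 (pn x.1).1.1) => h; first by rewrite subnn.
  by rewrite leq_subLR.
have diag : forall x, x \in L -> crd hU (bet x) (Z x) != 0.
  move=> x xL; have [ps hn hmax ht] := pnP x xL; have [e1 e2] := E12 x xL.
  rewrite /Z (psi_crd hU hT) coefX eqxx /=.
  rewrite !subnK // -!surjective_pairing ps.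
  exact: cs.
have off : forall x x', x \in L -> x' \in L -> x' != x -> (x.2 <= x'.2)%N ->
    crd hU (bet x) (Z x') = 0.
  move=> x x' xL x'L nx hx.
  rewrite /Z (psi_crd hU hT) coefX.
  case: (eqVneq x.1 x'.1) => hn.
  - have [ps hn1 hmax ht] := pnP x xL.
    have lt : (x.2 < x'.2)%N.
      rewrite ltn_neqAle hx andbT; apply: contra nx => /eqP e.
      by apply/eqP; move: hn e; case: x {xL hx ht hmax hn1 ps} => a1 a2; case: x' {x'L} => b1 b2 /= -> ->.
    have ex : rr x' = rr x by rewrite /rr hn.
    have exl : ll x' = ll x by rewrite /ll ex hn.
    have [e1 e2] := E12 x xL.
    rewrite ex exl eqxx /= !subnK //.
    set cand := (_, _, _).
    have -> : (cand \in s) = false.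
      apply/negP => hc; have := hmax cand hc.
      rewrite /cand /= => /(_ hn1).
      move=> h; move: h ht lt; set P2 := (pn x.1).2; set u1 := x.2; set u2 := x'.2; clearbody P2 u1 u2; lia.
    by [].
  - rewrite (negbTE (nu_neq _)) //.
    by rewrite /ll /rr !subnKC ?geq_minl.
rewrite -sizeL; exists (fun i : 'I_(size L) => Z (nth (0,0)%N L i)).
split; first by move=> i; apply: ZP.
apply: (@tri _ _ _ _ (fun i => crd hU (bet (nth (0,0)%N L i))) (fun i => (nth (0,0)%N L i).2)).
- move=> i a; rewrite crd_sumV; apply: eq_bigr => j _; exact: crdZ.
- by move=> i; apply: diag; apply: mem_nth.
- move=> i j ji hij; apply: off => //; try apply: mem_nth => //.
  by rewrite nth_uniq.
Qed.
End Main.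

Theorem mainTheorem4 (R : realType) (q qh : R[i])
  (U : algType R[i]) (E F G : U) (f : R[i] -> U)
  (T : algType R[i]) (tens : U -> U -> T) (Delta : U -> T)
  (P : U -> Prop) (mu : R[i]) (s : seq (nat * nat * nat))
  (c : nat * nat * nat -> R[i]) :
  transcendental q ->
  qh ^+ 2 = q ->
  U_relations q E F G f ->
  basis_family (fun x : nat * R[i] * nat * nat => x.1.1.2 != 0)
               (pbw q qh E F G f) ->
  is_tensor_square tens (fun x : nat * R[i] * nat * nat => x.1.1.2 != 0)
                   (pbw q qh E F G f) ->
  is_coproduct tens qh E F G f Delta ->
  right_coideal tens Delta P ->
  mu != 0 ->
  uniq s ->
  (forall p, p \in s -> c p != 0) ->
  let X := \sum_(p <- s) c p *: pbw q qh E F G f (p.1.1, mu, p.1.2, p.2) in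
  X != 0 ->
  P X ->
  dim_ge P (\sum_(t < (part4 s).+1) (s13 s t).+1).
Proof.
move=> tq hqh hrel hU hT hcop hco mu0 us cs X X0 PX.
exact: (main_sec tq hqh hrel hU hT hcop mu0 us hco cs X0 PX).
Qed.
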